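(* Let $n\ge2$, $A\in\mathbb{R}^{n\times n}$ symmetric with eigenvalues $\lambda_1\ge\dots\ge\lambda_n$, $\rho=\lambda_1-\lambda_n$, $\gamma>0$, and suppose $\beta\ge\frac{8n}{n-1}(1+\gamma)\rho\,n^{3/2}$. Then $f(\mathbf{z})=\frac12\mathbf{z}^TA\mathbf{z}+\frac{\beta}{2}\sum_kz_k^4$ on $\mathbb{S}^{n-1}$ is $(C_\gamma\rho,\frac{\gamma}{\sqrt2}\rho,C_\gamma\rho)$-strict-saddle, where $C_\gamma=\frac{4}{n-1}(1+\gamma)n^{3/2}-1$.
   Context: $\mathbb{S}^{n-1}$ is the unit sphere in $\mathbb{R}^n$, $\mathcal{T}_{\mathbf{z}}=\{\mathbf{v}:\mathbf{v}^T\mathbf{z}=0\}$. For $\mathbf{z}\in\mathbb{S}^{n-1}$ let $2\lambda=\mathbf{z}^TA\mathbf{z}+2\beta\|\mathbf{z}\|_4^4$, $\mathrm{grad} f(\mathbf{z})=[A+2\beta\,\mathrm{diag}(z_1^2,\dots,z_n^2)]\mathbf{z}-2\lambda\mathbf{z}$, and $H_f(\mathbf{z})[\mathbf{v}]=\mathbf{v}^T[A+6\beta\,\mathrm{diag}(z_1^2,\dots,z_n^2)-2\lambda I]\mathbf{v}$. For $\xi,\epsilon,\zeta>0$, $f$ is $(\xi,\epsilon,\zeta)$-strict-saddle if for every $\mathbf{z}\in\mathbb{S}^{n-1}$ at least one holds: (1) $H_f(\mathbf{z})[\mathbf{v}]\ge\xi$ for all $\mathbf{v}\in\mathcal{T}_{\mathbf{z}}\cap\mathbb{S}^{n-1}$;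 (2) $\|\mathrm{grad} f(\mathbf{z})\|\ge\epsilon$; (3) there is $\mathbf{v}\in\mathcal{T}_{\mathbf{z}}\cap\mathbb{S}^{n-1}$ with $H_f(\mathbf{z})[\mathbf{v}]\le-\zeta$. *)

(* Defs.v *)
From HB Require Import structures.
From mathcomp Require Import all_boot all_order all_algebra.
From mathcomp Require Import reals.
Set Implicit Arguments. Unset Strict Implicit. Unset Printing Implicit Defensive.
Import Order.TTheory GRing.Theory Num.Theory.
Local Open Scope ring_scope.

Section Defs.
Variables (R : realType) (n : nat).
Implicit Types (A : 'M[R]_n) (z v : 'cV[R]_n) (beta : R).

Definition on_sphere z : Prop := \sum_(i < n) z i 0 ^+ 2 = 1.
Definition in_tangent z v : Prop := (v^T *m z) 0 0 = 0.
Definition vnorm v : R := Num.sqrt (\sum_(i < n) v i 0 ^+ 2).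
Definition diagsq z : 'M[R]_n := diag_mx (\row_i (z i 0 ^+ 2)).
Definition two_lambda A beta z : R :=
  (z^T *m A *m z) 0 0 + 2 * beta * \sum_(i < n) z i 0 ^+ 4.
Definition rgrad A beta z : 'cV[R]_n :=
  (A + (2 * beta) *: diagsq z) *m z - two_lambda A beta z *: z.
Definition rhess A beta z v : R :=
  (v^T *m (A + (6 * beta) *: diagsq z - (two_lambda A beta z)%:M) *m v) 0 0.

(* f(z) = 1/2 z^T A z + beta/2 sum z_k^4 is (xi,eps,zeta)-strict-saddle on S^{n-1} *)
Definition strict_saddle A beta (xi eps zeta : R) : Prop :=
  forall z, on_sphere z ->
    (forall v, in_tangent z v -> on_sphere v -> xi <= rhess A beta z v)
    \/ eps <= vnorm (rgrad A beta z)
    \/ (exists v, [/\ in_tangent z v, on_sphere v & rhess A beta z v <= - zeta]).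
End Defs.

(* Main.v *)
Require Import Defs.
From HB Require Import structures.
From mathcomp Require Import all_boot all_order all_algebra.
From mathcomp Require Import reals.
From mathcomp Require Import classical_sets.
From mathcomp Require Import ring lra.
Import Order.TTheory GRing.Theory Num.Theory.
Local Open Scope ring_scope.
Set Implicit Arguments. Unset Strict Implicit. Unset Printing Implicit Defensive.

Definition dot (R : realType) (n : nat) (u v : 'cV[R]_n) : R := (u^T *m v) 0 0.

Lemma dotE (R : realType) n (u v : 'cV[R]_n) : dot u v = \sum_i u i 0 * v i 0.
Proof. by rewrite /dot mxE; apply: eq_bigr => i _; rewrite mxE. Qed.

Lemma dotC (R : realType) n (u v : 'cV[R]_n) : dot u v = dot v u.
Proof. by rewrite !dotE; apply: eq_bigr => i _; rewrite mulrC. Qed.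

Lemma dotDl (R : realType) n (u v w : 'cV[R]_n) : dot (u + v) w = dot u w + dot v w.
Proof. by rewrite !dotE -big_split; apply: eq_bigr => i _; rewrite mxE mulrDl. Qed.

Lemma dotDr (R : realType) n (u v w : 'cV[R]_n) : dot w (u + v) = dot w u + dot w v.
Proof. by rewrite !(dotC w) dotDl. Qed.

Lemma dotZl (R : realType) n c (u w : 'cV[R]_n) : dot (c *: u) w = c * dot u w.
Proof. by rewrite !dotE mulr_sumr; apply: eq_bigr => i _; rewrite mxE mulrA. Qed.

Lemma dotZr (R : realType) n c (u w : 'cV[R]_n) : dot w (c *: u) = c * dot w u.
Proof. by rewrite !(dotC w) dotZl. Qed.

Lemma dotNl (R : realType) n (u w : 'cV[R]_n) : dot (- u) w = - dot u w.
Proof. by rewrite -scaleN1r dotZl mulN1r. Qed.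

Lemma dotNr (R : realType) n (u w : 'cV[R]_n) : dot w (- u) = - dot w u.
Proof. by rewrite !(dotC w) dotNl. Qed.

Lemma dotBl (R : realType) n (u v w : 'cV[R]_n) : dot (u - v) w = dot u w - dot v w.
Proof. by rewrite dotDl dotNl. Qed.

Lemma dotBr (R : realType) n (u v w : 'cV[R]_n) : dot w (u - v) = dot w u - dot w v.
Proof. by rewrite dotDr dotNr. Qed.

Lemma dot_ge0 (R : realType) n (u : 'cV[R]_n) : 0 <= dot u u.
Proof. by rewrite dotE; apply: sumr_ge0 => i _; rewrite -expr2 sqr_ge0. Qed.

Lemma discr (R : realType) (a b c : R) : 0 <= c ->
  (forall t, 0 <= a + 2 * b * t + c * t ^+ 2) -> b ^+ 2 <= a * c.
Proof.
move=> c0 H; have a0 : 0 <= a by have := H 0; rewrite !mulr0 expr0n /= mulr0 !addr0.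
have [cpos|] := ltrP 0 c.
  have := H (- b / c).
  have -> : a + 2 * b * (- b / c) + c * (- b / c) ^+ 2 = a - b ^+ 2 / c.
    by field; rewrite gt_eqF.
  rewrite subr_ge0 ler_pdivrMr //.
move=> c0'; have c00 : c = 0 by apply/eqP; rewrite eq_le c0' c0.
subst c; rewrite mulr0.
have [b0|bn0] := eqVneq b 0; first by rewrite b0 expr0n.
have := H (- (a + 1) / (2 * b)).
have -> : a + 2 * b * (- (a + 1) / (2 * b)) + 0 * (- (a + 1) / (2 * b)) ^+ 2 = -1.
  by field.
lra.
Qed.

Lemma CSf (R : realType) n (f g : 'I_n -> R) :
  (\sum_i f i * g i) ^+ 2 <= (\sum_i f i ^+ 2) * (\sum_i g i ^+ 2).
Proof.
apply: discr; first by apply: sumr_ge0 => i _; rewrite sqr_ge0.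
move=> t.
have -> : \sum_i f i ^+ 2 + 2 * (\sum_i f i * g i) * t + (\sum_i g i ^+ 2) * t ^+ 2
  = \sum_i (f i + t * g i) ^+ 2.
  transitivity (\sum_i (f i ^+ 2 + (2 * t) * (f i * g i) + t ^+ 2 * g i ^+ 2)).
    by rewrite !big_split /= -!mulr_sumr; ring.
  by apply: eq_bigr => i _; ring.
by apply: sumr_ge0 => i _; rewrite sqr_ge0.
Qed.

Lemma dot_CS (R : realType) n (u v : 'cV[R]_n) : dot u v ^+ 2 <= dot u u * dot v v.
Proof.
have E : forall w : 'cV[R]_n, dot w w = \sum_i (w i 0) ^+ 2.
  by move=> w; rewrite dotE; apply: eq_bigr => i _; rewrite expr2.
rewrite !E dotE; exact: (CSf (fun i => u i 0) (fun i => v i 0)).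
Qed.
Definition Kmx (R : realType) n (D : 'M[R]_n) : R := \sum_i \sum_j D i j ^+ 2.

Lemma Kmx_ge0 (R : realType) n (D : 'M[R]_n) : 0 <= Kmx D.
Proof. by apply: sumr_ge0 => i _; apply: sumr_ge0 => j _; rewrite sqr_ge0. Qed.

Lemma mv_bound (R : realType) n (D : 'M[R]_n) (u : 'cV[R]_n) :
  dot (D *m u) (D *m u) <= Kmx D * dot u u.
Proof.
rewrite [X in _ <= X * _]/Kmx mulr_suml dotE; apply: ler_sum => i _.
rewrite mxE -expr2 dotE.
have -> : \sum_j u j 0 * u j 0 = \sum_j u j 0 ^+ 2 by apply: eq_bigr => j _; rewrite expr2.
exact: (CSf (fun j => D i j) (fun j => u j 0)).
Qed.

Lemma form_sym (R : realType) n (B : 'M[R]_n) (x y : 'cV[R]_n) : B^T = B ->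
  dot x (B *m y) = dot y (B *m x).
Proof.
move=> sB; rewrite /dot.
have h : forall M : 'M[R]_1, M 0 0 = (M^T) 0 0 by move=> M; rewrite mxE.
by rewrite h !trmx_mul trmxK sB mulmxA.
Qed.

Lemma formZ (R : realType) n (B : 'M[R]_n) c (x : 'cV[R]_n) :
  dot (c *: x) (B *m (c *: x)) = c ^+ 2 * dot x (B *m x).
Proof. by rewrite -scalemxAr dotZl dotZr mulrA expr2. Qed.

Lemma dotZZ (R : realType) n c (x : 'cV[R]_n) :
  dot (c *: x) (c *: x) = c ^+ 2 * dot x x.
Proof. by rewrite dotZl dotZr mulrA expr2. Qed.

Lemma normalize (R : realType) n (x : 'cV[R]_n) : 0 < dot x x ->
  let y := (Num.sqrt (dot x x))^-1 *: x in
  dot y y = 1 /\ forall B : 'M[R]_n, dot y (B *m y) = dot x (B *m x) / dot x x.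
Proof.
move=> xp y; have e : (Num.sqrt (dot x x))^-1 ^+ 2 = (dot x x)^-1.
  by rewrite exprVn sqr_sqrtr // ltW.
split; first by rewrite /y dotZZ e mulVf // gt_eqF.
by move=> B; rewrite /y formZ e mulrC.
Qed.

Lemma form_bound (R : realType) n (B : 'M[R]_n) (x : 'cV[R]_n) :
  dot x (B *m x) ^+ 2 <= Kmx B * dot x x ^+ 2.
Proof.
apply: (le_trans (dot_CS _ _)).
have := mv_bound B x; have := dot_ge0 x => h1 h2.
rewrite expr2 mulrA mulrC; apply: ler_wpM2r => //.
Qed.


Lemma sq_le (R : realType) (a b : R) : 0 <= a -> a <= b -> a ^+ 2 <= b ^+ 2.
Proof. by move=> a0 ab; rewrite !expr2; apply: ler_pM. Qed.

Lemma sq_lt (R : realType) (a b : R) : 0 <= a -> a < b -> a ^+ 2 < b ^+ 2.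
Proof. by move=> a0 ab; rewrite !expr2; apply: ltr_pM. Qed.

Local Open Scope classical_set_scope.

Lemma psd (R : realType) n (B : 'M[R]_n) : B^T = B ->
  (forall a, eigenvalue B a -> 0 <= a) -> forall x, 0 <= dot x (B *m x).
Proof.
move=> sB eB x0; rewrite leNgt; apply/negP => qx0.
have d0 : forall x : 'cV[R]_n, dot x x = 0 -> dot x (B *m x) = 0.
  move=> x dx; have := form_bound B x; rewrite dx expr0n /= mulr0.
  by move=> h; apply/eqP; rewrite -sqrf_eq0 eq_le h sqr_ge0.
have dx0 : 0 < dot x0 x0.
  rewrite lt_neqAle dot_ge0 andbT; apply/eqP => /esym /d0 h.
  by move: qx0; rewrite h ltxx.
pose S := [set r : R | exists x : 'cV[R]_n, dot x x = 1 /\ r = dot x (B *m x)].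
have [y0n y0q] := normalize dx0.
set y0 := _ *: x0 in y0n y0q.
have Sinf : has_inf S.
  split; first by exists (dot y0 (B *m y0)); exists y0.
  exists (- (1 + Kmx B)) => r [x [xn ->]].
  have := form_bound B x; rewrite xn expr1n mulr1 => h.
  have := Kmx_ge0 B => hk.
  rewrite leNgt; apply/negP => hlt.
  move: h hk hlt; set q := dot x (B *m x); set K := Kmx B => h hk hlt.
  have h3 : 0 < (- q - (1 + K)) * (- q + (1 + K)) by apply: mulr_gt0; lra.
  move: h hk hlt h3; clear; move=> h hk hlt h3; nra.
set m := inf S.
have mle : m <= dot y0 (B *m y0) by apply: ge_inf; [case: Sinf|exists y0].
have mneg : m < 0.
  by apply: (le_lt_trans mle); rewrite y0q ltr_pdivrMr // mul0r.
have qm : forall x, m * dot x x <= dot x (B *m x).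
  move=> x; have := dot_ge0 x; rewrite le_eqVlt => /orP[/eqP dz|dp].
    by rewrite -dz d0 // mulr0.
  have [yn yq] := normalize dp.
  have : m <= dot ((Num.sqrt (dot x x))^-1 *: x) (B *m ((Num.sqrt (dot x x))^-1 *: x)).
    by apply: ge_inf; [case: Sinf|eexists; split; [exact: yn|]].
  by rewrite yq ler_pdivlMr // mulrC.
pose C := B - m%:M.
have qC : forall x, dot x (C *m x) = dot x (B *m x) - m * dot x x.
  by move=> x; rewrite mulmxBl mul_scalar_mx dotBr dotZr.
have sC : C^T = C by rewrite /C raddfB /= sB tr_scalar_mx.
have qC0 : forall x, 0 <= dot x (C *m x) by move=> x; rewrite qC subr_ge0 qm.
case: (boolP (C \in unitmx)) => [Cu|Cnu]; last first.
  have : eigenvalue B m by rewrite /eigenvalue /eigenspace kermx_eq0 row_free_unit.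
  by move/eB; rewrite leNgt mneg.
have CS_C : forall x y, dot y (C *m x) ^+ 2 <= dot y (C *m y) * dot x (C *m x).
  move=> x y; apply: discr (qC0 x) _ => t.
  have := qC0 (y + t *: x).
  rewrite mulmxDr -scalemxAr !dotDl !dotDr !dotZl !dotZr (form_sym x y sC).
  move=> h; apply: (le_trans h); rewrite le_eqVlt; apply/orP; left; apply/eqP; ring.
pose D := invmx C.
pose L := Kmx D ^+ 2 * Kmx C.
have hKD := Kmx_ge0 D; have hKC := Kmx_ge0 C.
have key : forall x, dot x x = 1 -> 1 <= L * dot x (C *m x) ^+ 2.
  move=> x xn; set u := C *m x; set t := dot x (C *m x).
  have xu : D *m u = x by rewrite /u /D mulKmx.
  have h1 : 1 <= Kmx D * dot u u by have := mv_bound D u; rewrite xu xn.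
  have h2 : dot u u ^+ 2 <= dot u (C *m u) * t.
    have := CS_C x u; rewrite -/u -/t.
    by rewrite (form_sym u x sC) /u.
  have h3 : dot u (C *m u) ^+ 2 <= dot u u * (Kmx C * dot u u).
    apply: (le_trans (dot_CS _ _)); apply: ler_wpM2l; [exact: dot_ge0|exact: mv_bound].
  have t0 : 0 <= t := qC0 x.
  have p0 : 0 <= dot u (C *m u) := qC0 u.
  have U0 : 0 <= dot u u := dot_ge0 u.
  move: h1 h2 h3 t0 p0 U0 hKD hKC; rewrite /L.
  move: (dot u u) (dot u (C *m u)) t (Kmx D) (Kmx C); clear => U p t KD KC h1 h2 h3 t0 p0 U0 hKD hKC.
  have h4 : (U ^+ 2) ^+ 2 <= (p * t) ^+ 2.
    by rewrite !expr2; apply: ler_pM => //; apply: sqr_ge0.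
  have h5 : (p * t) ^+ 2 <= U * (KC * U) * t ^+ 2.
    by rewrite exprMn; apply: ler_wpM2r => //; rewrite sqr_ge0.
  have Up : 0 < U.
    by rewrite lt_neqAle U0 andbT; apply/eqP => U00; move: h1; rewrite -U00 mulr0 ler10.
  have h6 : U ^+ 2 <= KC * t ^+ 2.
    have h7 : U ^+ 2 * U ^+ 2 <= U ^+ 2 * (KC * t ^+ 2).
      have e1 : (U ^+ 2) ^+ 2 = U ^+ 2 * U ^+ 2 by rewrite expr2.
      have e2 : U * (KC * U) * t ^+ 2 = U ^+ 2 * (KC * t ^+ 2) by ring.
      by rewrite -e1 -e2; exact: (le_trans h4 h5).
    by move: h7; rewrite ler_pM2l // exprn_gt0.
  have h8 : 1 <= KD ^+ 2 * U ^+ 2.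
    by have := sq_le ler01 h1; rewrite expr1n exprMn.
  apply: (le_trans h8); rewrite -mulrA; apply: ler_wpM2l => //; exact: sqr_ge0.
have L0 : 0 <= L by apply: mulr_ge0 => //; apply: sqr_ge0.
have eps0 : 0 < (L + 1)^-1 by rewrite invr_gt0; lra.
have [r [x [xn ->]] rlt] := inf_adherent eps0 Sinf.
have := key x xn; have := qC0 x; rewrite qC xn mulr1.
set q := dot x (B *m x) in rlt *; move=> h0 h1.
have t1 : (q - m) * (L + 1) < 1 by rewrite -ltr_pdivlMr ?mul1r; lra.
have h2 : (q - m) ^+ 2 * (L + 1) ^+ 2 < 1.
  rewrite -exprMn; have := sq_lt _ t1; rewrite expr1n; apply.
  by apply: mulr_ge0; lra.
have h3 : L * (q - m) ^+ 2 <= (q - m) ^+ 2 * (L + 1) ^+ 2.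
  rewrite mulrC; apply: ler_wpM2l; first exact: sqr_ge0.
  rewrite expr2; nra.
have := le_lt_trans (le_trans h1 h3) h2.
by rewrite ltxx.
Qed.
Local Close Scope classical_set_scope.

Lemma rayleigh (R : realType) n (A : 'M[R]_n) (lam1 lamn : R) : A^T = A ->
  (forall a, eigenvalue A a -> lamn <= a <= lam1) ->
  forall x, lamn * dot x x <= dot x (A *m x) <= lam1 * dot x x.
Proof.
move=> sA eA x; apply/andP; split.
  have := @psd _ _ (A - lamn%:M) _ _ x.
  rewrite mulmxBl mul_scalar_mx dotBr dotZr subr_ge0; apply.
    by rewrite raddfB /= sA tr_scalar_mx.
  move=> a /eigenvalueP [v vE vn0].
  have : eigenvalue A (a + lamn).
    apply/eigenvalueP; exists v => //.
    by move: vE; rewrite mulmxBr mul_mx_scalar scalerDl => <-; rewrite subrK.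
  by move/eA => /andP [h _]; lra.
have := @psd _ _ (lam1%:M - A) _ _ x.
rewrite mulmxBl mul_scalar_mx dotBr dotZr subr_ge0; apply.
  by rewrite raddfB /= sA tr_scalar_mx.
move=> a /eigenvalueP [v vE vn0].
have : eigenvalue A (lam1 - a).
  apply/eigenvalueP; exists v => //.
  move: vE; rewrite mulmxBr mul_mx_scalar scalerBl => <-.
  by rewrite opprB addrC subrK.
by move/eA => /andP [_ h]; lra.
Qed.

Lemma sphereE (R : realType) n (z : 'cV[R]_n) : on_sphere z <-> dot z z = 1.
Proof.
rewrite /on_sphere dotE.
by rewrite (eq_bigr (fun i => z i 0 ^+ 2)) // => i _; rewrite expr2.
Qed.

Lemma vnormE (R : realType) n (z : 'cV[R]_n) : vnorm z = Num.sqrt (dot z z).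
Proof.
rewrite /vnorm dotE.
by rewrite (eq_bigr (fun i => z i 0 ^+ 2)) // => i _; rewrite expr2.
Qed.

Lemma dot_diag (R : realType) n (v : 'cV[R]_n) (d : 'rV[R]_n) :
  dot v (diag_mx d *m v) = \sum_i d 0 i * v i 0 ^+ 2.
Proof.
rewrite dotE; apply: eq_bigr => i _; rewrite mul_diag_mx mxE; ring.
Qed.

Lemma rhessE (R : realType) n (A : 'M[R]_n) beta (z v : 'cV[R]_n) :
  rhess A beta z v = dot v (A *m v) + 6 * beta * (\sum_i z i 0 ^+ 2 * v i 0 ^+ 2)
     - two_lambda A beta z * dot v v.
Proof.
rewrite /rhess -mulmxA mulmxBl mulmxDl -scalemxAl mul_scalar_mx.
rewrite -/(dot _ _) dotBr dotDr !dotZr /diagsq dot_diag.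
by rewrite (eq_bigr (fun i => z i 0 ^+ 2 * v i 0 ^+ 2)) // => i _; rewrite mxE.
Qed.

Lemma two_lambdaE (R : realType) n (A : 'M[R]_n) beta (z : 'cV[R]_n) :
  two_lambda A beta z = dot z (A *m z) + 2 * beta * \sum_i z i 0 ^+ 4.
Proof. by rewrite /two_lambda -mulmxA. Qed.

Lemma rgradE (R : realType) n (A : 'M[R]_n) beta (z : 'cV[R]_n) :
  let mu := \sum_i z i 0 ^+ 4 in
  rgrad A beta z = (A *m z - dot z (A *m z) *: z)
     + (2 * beta) *: \col_i (z i 0 ^+ 3 - mu * z i 0).
Proof.
move=> mu; rewrite /rgrad two_lambdaE -/mu.
set Az := A *m z; set Q := dot z Az.
rewrite mulmxDl -scalemxAl /diagsq mul_diag_mx -/Az.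
apply/matrixP => i j; rewrite !mxE ord1; ring.
Qed.

Lemma sum_ge_term (R : realType) n (f : 'I_n -> R) j :
  (forall i, 0 <= f i) -> f j <= \sum_i f i.
Proof. by move=> f0; rewrite (bigD1 j) //= lerDl sumr_ge0. Qed.

Lemma dot_delta (R : realType) n (j : 'I_n) (x : 'cV[R]_n) :
  dot (delta_mx j 0) x = x j 0.
Proof.
rewrite dotE (bigD1 j) //= big1 ?addr0; first by rewrite mxE !eqxx mul1r.
by move=> i /negbTE ij; rewrite mxE ij mul0r.
Qed.


Lemma numfacts (R : realType) (N s gamma rho beta : R) : 2 <= N -> 0 <= s -> s ^+ 2 = N ->
  0 < gamma -> 0 <= rho ->
  8 * N / (N - 1) * (1 + gamma) * rho * (N * s) <= beta ->
  2 * N * (4 / (N - 1) * (1 + gamma) * (N * s) * rho) <= beta /\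
  64 * N ^+ 3 * ((1 + gamma) ^+ 2 * rho ^+ 2) <= beta ^+ 2.
Proof.
move=> N2 s0 ss g0 r0 hb.
have N1 : N - 1 != 0 by apply/eqP; lra.
split.
  apply: le_trans hb; rewrite le_eqVlt; apply/orP; left; apply/eqP.
  by field.
have h1 : 8 * N * (1 + gamma) * rho * s <= 8 * N / (N - 1) * (1 + gamma) * rho * (N * s).
  have -> : 8 * N / (N - 1) * (1 + gamma) * rho * (N * s) =
     (8 * N * (1 + gamma) * rho * s) * (N / (N - 1)) by field.
  rewrite ler_peMr //; first by apply: mulr_ge0 => //; apply: mulr_ge0; [|lra]; apply: mulr_ge0; lra.
  by rewrite ler_pdivlMr ?mul1r; lra.
have h2 : 0 <= 8 * N * (1 + gamma) * rho * s.
  by apply: mulr_ge0 => //; apply: mulr_ge0; [|lra]; apply: mulr_ge0; lra.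
have := sq_le h2 (le_trans h1 hb).
suff -> : (8 * N * (1 + gamma) * rho * s) ^+ 2 = 64 * N ^+ 3 * ((1 + gamma) ^+ 2 * rho ^+ 2) by [].
rewrite !exprMn ss; ring.
Qed.


Lemma caseB_num (R : realType) (N mu beta rho kap Qv Qz lam1 lamn X : R) :
  2 <= N -> 1 <= N * mu -> 0 < beta -> 2 * N * (kap * rho) <= beta ->
  lamn <= Qv -> Qz <= lam1 -> 8 * N * (mu - X) <= 1 -> rho = lam1 - lamn ->
  (kap - 1) * rho <= Qv + 6 * beta * X - (Qz + 2 * beta * mu) * 1.
Proof.
move=> N2 Nmu b0 hk hv hz hX er.
suff : kap * rho <= 6 * beta * X - 2 * beta * mu by rewrite er; lra.
have Np : 0 < N by lra.
rewrite -(ler_pM2l Np).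
have e1 : 0 <= beta * (N * X - N * mu + 1 / 8).
  by apply: mulr_ge0; lra.
have e2 : 0 <= beta * (N * mu - 1) by apply: mulr_ge0; lra.
have -> : N * (6 * beta * X - 2 * beta * mu) = 6 * (beta * (N * X - N * mu + 1 / 8))
   + 4 * (beta * (N * mu - 1)) + 13 / 4 * beta by field.
move: e1 e2 hk b0; set e1 := beta * _; set e2 := beta * _; set P := kap * _.
have -> : 2 * N * P = 2 * (N * P) by ring.
move: (N * P) => NP. lra.
Qed.

Lemma caseA_num (R : realType) (N mu beta rho kap Qv Qz lam1 lamn X a2 : R) :
  2 <= N -> 1 <= N * mu -> 0 < beta -> 2 * N * (kap * rho) <= beta ->
  Qv <= lam1 -> lamn <= Qz -> rho = lam1 - lamn ->
  0 <= a2 -> 32 * N * a2 <= 1 -> 0 <= X ->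
  X * (1 - a2) = a2 - 2 * a2 ^+ 2 + a2 * mu ->
  Qv + 6 * beta * X - (Qz + 2 * beta * mu) * 1 <= - ((kap - 1) * rho).
Proof.
move=> N2 Nmu b0 hk hv hz er a0 ha X0 hX.
have Np : 0 < N by lra.
have mu0 : 0 <= mu.
  by rewrite -(pmulr_rge0 mu Np); apply: le_trans Nmu.
have a64 : a2 <= 1 / 64.
  have : 32 * 2 * a2 <= 32 * N * a2 by apply: ler_wpM2r => //; lra.
  lra.
have amu : 32 * a2 <= mu.
  rewrite -(ler_pM2l Np); move: ha Nmu; set q := N * mu.
  have -> : N * (32 * a2) = 32 * N * a2 by ring.
  lra.
have amu2 : a2 * mu <= mu / 64.
  have : a2 * mu <= 1 / 64 * mu by apply: ler_wpM2r.
  by have -> : mu / 64 = 1 / 64 * mu by field.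
have asq : 0 <= a2 ^+ 2 by apply: sqr_ge0.
have Xd : X * (1 - a2) <= 3 / 64 * mu.
  rewrite hX; move: amu amu2 asq; set p := a2 * mu; set q := a2 ^+ 2; lra.
have X63 : X * (63 / 64) <= X * (1 - a2) by apply: ler_wpM2l => //; lra.
have Xmu : X <= mu / 4 by lra.
have h6 : 6 * beta * X <= 3 / 2 * (beta * mu).
  have : beta * X <= beta * (mu / 4) by apply: ler_wpM2l => //; lra.
  have -> : beta * (mu / 4) = 1 / 4 * (beta * mu) by field.
  have -> : 6 * beta * X = 6 * (beta * X) by ring.
  by move: (beta * X) (beta * mu) => bx bm; lra.
have hk2 : kap * rho <= 1 / 2 * (beta * mu).
  rewrite -(ler_pM2l Np).
  have e : 0 <= beta * (N * mu - 1) by apply: mulr_ge0; lra.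
  have -> : N * (1 / 2 * (beta * mu)) = 1 / 2 * (beta * (N * mu - 1)) + beta / 2 by field.
  have -> : N * (kap * rho) = (2 * N * (kap * rho)) / 2 by field.
  move: e hk; move: (beta * (N * mu - 1)) (2 * N * (kap * rho)) => e1 e2; lra.
rewrite mulrBl mul1r -!mulrA mulr1.
move: h6 hk2; rewrite -!mulrA; move: (beta * X) (beta * mu) (kap * rho) => bx bm kr.
lra.
Qed.

Lemma Hbound_num (R : realType) (N gamma rho beta G W H : R) :
  0 <= N -> 0 <= gamma -> G <= gamma ^+ 2 * rho ^+ 2 / 2 -> W <= rho ^+ 2 ->
  4 * beta ^+ 2 * H <= 2 * G + 2 * W ->
  64 * N ^+ 3 * ((1 + gamma) ^+ 2 * rho ^+ 2) <= beta ^+ 2 -> 0 < beta ->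
  128 * N ^+ 3 * H <= 1.
Proof.
move=> N0 g0 hG hW hH hb b0.
have r2 : 0 <= rho ^+ 2 := sqr_ge0 rho.
have h1 : 4 * beta ^+ 2 * H <= 2 * ((1 + gamma) ^+ 2 * rho ^+ 2).
  apply: (le_trans hH).
  have e : 0 <= (4 * gamma + gamma ^+ 2) * rho ^+ 2.
    by apply: mulr_ge0 => //; apply: addr_ge0; [lra|apply: sqr_ge0].
  have -> : 2 * ((1 + gamma) ^+ 2 * rho ^+ 2) =
    2 * (gamma ^+ 2 * rho ^+ 2 / 2) + 2 * rho ^+ 2 + (4 * gamma + gamma ^+ 2) * rho ^+ 2 by field.
  lra.
have N3 : 0 <= N ^+ 3 by apply: exprn_ge0.
have h2 : 64 * N ^+ 3 * (4 * beta ^+ 2 * H) <= 64 * N ^+ 3 * (2 * ((1 + gamma) ^+ 2 * rho ^+ 2)).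
  by apply: ler_wpM2l => //; lra.
have b2 : 0 < beta ^+ 2 by apply: exprn_gt0.
have h3 : beta ^+ 2 * (128 * N ^+ 3 * H) <= beta ^+ 2 * 1.
  have -> : beta ^+ 2 * (128 * N ^+ 3 * H) = (64 * N ^+ 3 * (4 * beta ^+ 2 * H)) / 2 by field.
  have e : 64 * N ^+ 3 * (2 * ((1 + gamma) ^+ 2 * rho ^+ 2)) =
     2 * (64 * N ^+ 3 * ((1 + gamma) ^+ 2 * rho ^+ 2)) by ring.
  rewrite e in h2.
  move: h2 hb; move: (64 * N ^+ 3 * (4 * beta ^+ 2 * H)) (64 * N ^+ 3 * ((1 + gamma) ^+ 2 * rho ^+ 2)) => p q.
  lra.
by rewrite ler_pM2l in h3.
Qed.

Lemma coordA_num (R : realType) (N mu a h : R) :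
  2 <= N -> 1 <= N * mu -> h = a ^+ 3 - mu * a -> 128 * N ^+ 3 * h ^+ 2 <= 1 ->
  a ^+ 2 < mu / 2 -> 32 * N * a ^+ 2 <= 1.
Proof.
move=> N2 Nmu -> hh ha.
have Np : 0 < N by lra.
have e1 : (a ^+ 3 - mu * a) ^+ 2 = a ^+ 2 * (mu - a ^+ 2) ^+ 2 by ring.
have m0 : 0 <= mu / 2 by apply: le_trans (ltW ha); apply: sqr_ge0.
have e2 : (mu / 2) ^+ 2 <= (mu - a ^+ 2) ^+ 2 by apply: sq_le => //; lra.
have a2 : 0 <= a ^+ 2 := sqr_ge0 a.
have e3 : a ^+ 2 * (mu / 2) ^+ 2 <= (a ^+ 3 - mu * a) ^+ 2.
  by rewrite e1; apply: ler_wpM2l.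
have N3 : 0 <= 128 * N ^+ 3 by apply: mulr_ge0 => //; apply: exprn_ge0; lra.
have e4 : 128 * N ^+ 3 * (a ^+ 2 * (mu / 2) ^+ 2) <= 1.
  by apply: le_trans hh; apply: ler_wpM2l.
have e5 : 128 * N ^+ 3 * (a ^+ 2 * (mu / 2) ^+ 2) = 32 * N * a ^+ 2 * (N * mu) ^+ 2 by field.
rewrite e5 in e4.
have e6 : 1 <= (N * mu) ^+ 2 by rewrite -(expr1n R 2); apply: sq_le.
have p0 : 0 <= 32 * N * a ^+ 2 by apply: mulr_ge0 => //; lra.
apply: le_trans e4; rewrite -{1}(mulr1 (32 * N * a ^+ 2)); exact: ler_wpM2l.
Qed.

Lemma coordB_num (R : realType) (N mu a h : R) :
  2 <= N -> 1 <= N * mu -> h = a ^+ 3 - mu * a -> 128 * N ^+ 3 * h ^+ 2 <= 1 ->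
  mu / 2 <= a ^+ 2 -> 8 * N * (mu - a ^+ 2) <= 1.
Proof.
move=> N2 Nmu -> hh ha.
have Np : 0 < N by lra.
have e1 : (a ^+ 3 - mu * a) ^+ 2 = a ^+ 2 * (mu - a ^+ 2) ^+ 2 by ring.
have s0 : 0 <= (mu - a ^+ 2) ^+ 2 := sqr_ge0 _.
have e3 : mu / 2 * (mu - a ^+ 2) ^+ 2 <= (a ^+ 3 - mu * a) ^+ 2.
  by rewrite e1; apply: ler_wpM2r.
have N3 : 0 <= 128 * N ^+ 3 by apply: mulr_ge0 => //; apply: exprn_ge0; lra.
have e4 : 128 * N ^+ 3 * (mu / 2 * (mu - a ^+ 2) ^+ 2) <= 1.
  by apply: le_trans hh; apply: ler_wpM2l.
have e5 : 128 * N ^+ 3 * (mu / 2 * (mu - a ^+ 2) ^+ 2) = (8 * N * (mu - a ^+ 2)) ^+ 2 * (N * mu) by field.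
rewrite e5 in e4.
have e6 : (8 * N * (mu - a ^+ 2)) ^+ 2 <= 1.
  apply: le_trans e4; rewrite -{1}(mulr1 ((8 * N * (mu - a ^+ 2)) ^+ 2)).
  by apply: ler_wpM2l => //; apply: sqr_ge0.
rewrite leNgt; apply/negP => h1.
have := sq_lt ler01 h1; rewrite expr1n => h2.
by move: (lt_le_trans h2 e6); rewrite ltxx.
Qed.


Lemma form_expand (R : realType) n (A : 'M[R]_n) a b (u v : 'cV[R]_n) : A^T = A ->
  dot (a *: u + b *: v) (A *m (a *: u + b *: v)) =
  a ^+ 2 * dot u (A *m u) + 2 * a * b * dot u (A *m v) + b ^+ 2 * dot v (A *m v).
Proof.
move=> sA; rewrite mulmxDr -!scalemxAr !dotDl !dotDr !dotZl !dotZr (form_sym v u sA); ring.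
Qed.

Lemma dot_expand (R : realType) n a b (u v : 'cV[R]_n) :
  dot (a *: u + b *: v) (a *: u + b *: v) =
  a ^+ 2 * dot u u + 2 * a * b * dot u v + b ^+ 2 * dot v v.
Proof. rewrite !dotDl !dotDr !dotZl !dotZr (dotC v u); ring. Qed.

Lemma parallelogram (R : realType) n (u v : 'cV[R]_n) :
  dot (u - v) (u - v) <= 2 * dot u u + 2 * dot v v.
Proof.
have := dot_ge0 (u + v).
rewrite !dotBl !dotBr !dotDl !dotDr (dotC v u).
move: (dot u u) (dot u v) (dot v v) => a b c; lra.
Qed.

Lemma Wbound (R : realType) n (A : 'M[R]_n) (lam1 lamn : R) (w z : 'cV[R]_n) :
  A^T = A -> (forall x, lamn * dot x x <= dot x (A *m x) <= lam1 * dot x x) ->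
  dot z z = 1 -> dot w z = 0 -> 0 < lam1 - lamn -> dot w w = dot w (A *m z) ->
  dot w w <= (lam1 - lamn) ^+ 2.
Proof.
move=> sA ray zz wz rp ww.
set k := (lam1 - lamn)^-1.
have h1 := ray (k *: w + 1 *: z).
have h2 := ray (k *: w + (-1) *: z).
rewrite form_expand // dot_expand wz zz -ww in h1.
rewrite form_expand // dot_expand wz zz -ww in h2.
move/andP: h1 => [_ h1]; move/andP: h2 => [h2 _].
have W0 : 0 <= dot w w := dot_ge0 w.
have kp : 0 < k by rewrite invr_gt0.
have e : 4 * k * dot w w <= (lam1 - lamn) * (k ^+ 2 * dot w w + 1).
  move: h1 h2; rewrite !expr1n; rewrite (_ : (-1) ^+ 2 = 1 :> R); last by rewrite sqrrN expr1n.
  lra.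
have e2 : (lam1 - lamn) * (4 * k * dot w w) <= (lam1 - lamn) * ((lam1 - lamn) * (k ^+ 2 * dot w w + 1)).
  by apply: ler_wpM2l => //; lra.
have e3 : (lam1 - lamn) * (4 * k * dot w w) = 4 * dot w w by rewrite /k; field; rewrite gt_eqF.
have e4 : (lam1 - lamn) * ((lam1 - lamn) * (k ^+ 2 * dot w w + 1)) = dot w w + (lam1 - lamn) ^+ 2.
  by rewrite /k; field; rewrite gt_eqF.
rewrite e3 e4 in e2; lra.
Qed.


Theorem theorem12 (R : realType) (n : nat) (A : 'M[R]_n) (lam1 lamn gamma beta : R) :
  (2 <= n)%N ->
  A^T = A ->
  eigenvalue A lam1 -> eigenvalue A lamn ->
  (forall a, eigenvalue A a -> lamn <= a <= lam1) ->
  0 < gamma ->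
  let rho := lam1 - lamn in
  let n32 := n%:R * Num.sqrt (n%:R : R) in
  8 * n%:R / (n%:R - 1) * (1 + gamma) * rho * n32 <= beta ->
  let Cg := 4 / (n%:R - 1) * (1 + gamma) * n32 - 1 in
  strict_saddle A beta (Cg * rho) (gamma / Num.sqrt 2 * rho) (Cg * rho).
Proof.
move=> n2 sA e1 en eA g0 rho n32 hb Cg z zs.
have ray := rayleigh sA eA.
have rho0 : 0 <= rho by have := eA _ e1; rewrite /rho subr_ge0 => /andP[].
have N2 : 2 <= (n%:R : R) by rewrite (ler_nat R 2 n).
have ss : Num.sqrt (n%:R : R) ^+ 2 = n%:R by rewrite sqr_sqrtr // (le_trans _ N2).
have [F2 F3] := @numfacts R _ _ _ _ _ N2 (sqrtr_ge0 _) ss g0 rho0 hb.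
move: F2 F3 hb; rewrite /Cg /n32.
move: (Num.sqrt (n%:R : R)) ss (sqrtr_ge0 (n%:R : R)) => s ss s0.
move: N2 ray rho0; rewrite /rho.
have zz : dot z z = 1 by rewrite -sphereE.
set N : R := n%:R.
move=> N2 ray rho0 F2 F3 hb.
set kap := 4 / (N - 1) * (1 + gamma) * (N * s).
set eps := gamma / Num.sqrt 2 * (lam1 - lamn).
case: (lerP eps (vnorm (rgrad A beta z))) => [hg|hg]; first by right; left.
set g := rgrad A beta z in hg.
have G0 : 0 <= dot g g := dot_ge0 g.
have hG : dot g g < gamma ^+ 2 * (lam1 - lamn) ^+ 2 / 2.
  rewrite vnormE in hg.
  have := sq_lt (sqrtr_ge0 _) hg; rewrite sqr_sqrtr //.
  rewrite /eps !exprMn exprVn sqr_sqrtr //.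
  by rewrite mulrAC.
have rpos : 0 < lam1 - lamn.
  rewrite lt_neqAle rho0 andbT; apply/eqP => r0; move: hG; rewrite -r0.
  by rewrite expr0n /= mulr0 mul0r ltNge G0.
have F2' : 2 * N * (kap * (lam1 - lamn)) <= beta := F2.
have Np : 0 < N by apply: lt_le_trans N2.
have sp : 0 < s.
  rewrite lt_neqAle s0 andbT; apply/eqP => s00; move: ss; rewrite -s00 expr0n /= => N0.
  by move: Np; rewrite /N -N0 ltxx.
have kp : 0 < kap.
  apply: mulr_gt0; last exact: mulr_gt0.
  apply: mulr_gt0; last by apply: addr_gt0.
  by apply: divr_gt0 => //; rewrite subr_gt0; apply: lt_le_trans N2; rewrite ltr1n.
have bp : 0 < beta.
  apply: lt_le_trans F2'; apply: mulr_gt0; first by apply: mulr_gt0.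
  exact: mulr_gt0.
set mu := \sum_i z i 0 ^+ 4.
have Nmu : 1 <= N * mu.
  have := CSf (fun i => z i 0 ^+ 2) (fun _ => 1).
  rewrite /= (eq_bigr (fun i => z i 0 ^+ 2)); last by move=> i _; rewrite mulr1.
  rewrite zs expr1n (eq_bigr (fun i => z i 0 ^+ 4)); last by move=> i _; rewrite -exprM.
  by rewrite sumr_const card_ord -/mu mulrC.
set Qz := dot z (A *m z).
set w := A *m z - Qz *: z.
set h := \col_i (z i 0 ^+ 3 - mu * z i 0).
have gE : g = w + (2 * beta) *: h by rewrite /g rgradE.
have wz : dot w z = 0 by rewrite /w dotBl dotZl zz mulr1 dotC subrr.
have ww : dot w w = dot w (A *m z) by rewrite {1}/w dotBr dotZr wz mulr0 subr0.
have Wb := Wbound sA ray zz wz rpos ww.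
have hH : 4 * beta ^+ 2 * dot h h <= 2 * dot g g + 2 * dot w w.
  have e : (2 * beta) *: h = g - w by rewrite gE addrC addKr.
  have := parallelogram g w; rewrite -e dotZZ.
  by move=> H; have -> : 4 * beta ^+ 2 = (2 * beta) ^+ 2 by ring.
have H1 : 128 * N ^+ 3 * dot h h <= 1.
  exact: (@Hbound_num R _ _ _ _ _ _ _ (ltW Np) (ltW g0) (ltW hG) Wb hH F3 bp).
have hj : forall j, 128 * N ^+ 3 * (z j 0 ^+ 3 - mu * z j 0) ^+ 2 <= 1.
  move=> j; apply: le_trans H1; apply: ler_wpM2l.
    by apply: mulr_ge0 => //; apply: exprn_ge0; apply: ltW.
  rewrite dotE (_ : z j 0 ^+ 3 - mu * z j 0 = h j 0); last by rewrite mxE.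
  rewrite [h j 0 ^+ 2]expr2; apply: (@sum_ge_term R n (fun i => h i 0 * h i 0) j) => i.
  by rewrite -expr2 sqr_ge0.
case: (boolP [exists j, z j 0 ^+ 2 < mu / 2]) => [/existsP [j ha]|hB].
  right; right.
  have haN := @coordA_num R N mu (z j 0) _ N2 Nmu (erefl _) (hj j) ha.
  set a := z j 0 in ha haN.
  have a0 : 0 <= a ^+ 2 := sqr_ge0 a.
  have a1 : 0 < 1 - a ^+ 2.
    have : 32 * 2 * a ^+ 2 <= 32 * N * a ^+ 2 by apply: ler_wpM2r => //; apply: ler_wpM2l.
    lra.
  set e : 'cV[R]_n := delta_mx j 0.
  set x := e - a *: z.
  have ee : dot e e = 1 by rewrite dot_delta mxE !eqxx.
  have ez : dot e z = a by rewrite dot_delta.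
  have dxx : dot x x = 1 - a ^+ 2.
    rewrite /x dotBl !dotBr !dotZl !dotZr ee ez (dotC z e) ez zz; ring.
  have xp : 0 < dot x x by rewrite dxx.
  have [yn yq] := normalize xp.
  set k := (Num.sqrt (dot x x))^-1 in yn yq.
  set y := k *: x in yn yq.
  have kk : k ^+ 2 * (1 - a ^+ 2) = 1.
    by rewrite /k exprVn sqr_sqrtr ?dxx ?mulVf // ?gt_eqF // ltW.
  exists y; split.
  - rewrite /in_tangent -/(dot y z) /y dotZl /x dotBl dotZl ez zz mulr1 subrr.
    by rewrite mulr0.
  - by rewrite sphereE.
  rewrite rhessE two_lambdaE yn -/mu.
  have hv := ray y; rewrite yn !mulr1 in hv; move/andP: hv => [_ hv].
  have hz := ray z; rewrite zz !mulr1 in hz; move/andP: hz => [hz _].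
  have X0 : 0 <= \sum_i z i 0 ^+ 2 * y i 0 ^+ 2.
    by apply: sumr_ge0 => i _; apply: mulr_ge0; apply: sqr_ge0.
  refine (@caseA_num R N mu beta (lam1 - lamn) kap _ _ lam1 lamn _ (a ^+ 2) N2 Nmu bp F2' hv hz (erefl _) a0 haN X0 _).
  have S : \sum_i z i 0 ^+ 2 * y i 0 ^+ 2 = k ^+ 2 * \sum_i z i 0 ^+ 2 * x i 0 ^+ 2.
    by rewrite mulr_sumr; apply: eq_bigr => i _; rewrite /y mxE; ring.
  have xi : forall i, x i 0 = (i == j)%:R - a * z i 0.
    by move=> i; rewrite /x /e !mxE eqxx andbT.
  have T : \sum_i z i 0 ^+ 2 * x i 0 ^+ 2 = a ^+ 2 * (1 - a ^+ 2) ^+ 2 + a ^+ 2 * (mu - a ^+ 4).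
    have R' : \sum_(i | i != j) z i 0 ^+ 2 * x i 0 ^+ 2 = a ^+ 2 * \sum_(i | i != j) z i 0 ^+ 4.
      by rewrite mulr_sumr; apply: eq_bigr => i ij; rewrite xi (negbTE ij) /= mulr0n; ring.
    have mE : mu = a ^+ 4 + \sum_(i | i != j) z i 0 ^+ 4 by rewrite /mu (bigD1 j).
    rewrite (bigD1 j) //= R' mE (xi j) eqxx /= -/a; ring.
  rewrite S T.
  have -> : k ^+ 2 * (a ^+ 2 * (1 - a ^+ 2) ^+ 2 + a ^+ 2 * (mu - a ^+ 4)) * (1 - a ^+ 2)
    = (k ^+ 2 * (1 - a ^+ 2)) * (a ^+ 2 * (1 - a ^+ 2) ^+ 2 + a ^+ 2 * (mu - a ^+ 4)) by ring.
  rewrite kk mul1r; ring.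
left => v vt vs.
have vv : dot v v = 1 by rewrite -sphereE.
rewrite rhessE two_lambdaE vv -/mu.
have hv := ray v; rewrite vv !mulr1 in hv; move/andP: hv => [hv _].
have hz := ray z; rewrite zz !mulr1 in hz; move/andP: hz => [_ hz].
refine (@caseB_num R N mu beta (lam1 - lamn) kap _ _ lam1 lamn _ N2 Nmu bp F2' hv hz _ (erefl _)).
have hBj : forall j, 8 * N * (mu - z j 0 ^+ 2) <= 1.
  move=> j; apply: (@coordB_num R N mu (z j 0) _ N2 Nmu (erefl _) (hj j)).
  move: hB; rewrite negb_exists => /forallP /(_ j); by rewrite -leNgt.
set c := (8 * N)^-1.
have N8p : 0 < 8 * N by apply: mulr_gt0.
have c8 : 8 * N * c = 1 by rewrite /c mulfV // mulf_neq0 // ?gt_eqF.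
have hX : \sum_i (mu - c) * v i 0 ^+ 2 <= \sum_i z i 0 ^+ 2 * v i 0 ^+ 2.
  apply: ler_sum => i _; apply: ler_wpM2r; first exact: sqr_ge0.
  move: (hBj i) => hb8; rewrite -(ler_pM2l N8p) mulrBr c8; lra.
move: hX; rewrite -mulr_sumr vs mulr1 => hX.
rewrite -{2}c8; apply: ler_wpM2l; [exact: ltW|lra].
Qed.
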